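(* Let $n,k,r$ be integers with $k,r\geq 2$ and $n\geq k+r$, and let $H$ be a vertex-$k$-maximal $r$-uniform hypergraph on $n$ vertices with a separation triple $(S,H_1,H_2)$, and let $n_i=|V(H_i)|$ for $i=1,2$. Then (i) every $r$-subset $e$ of $V(H)$ with $e\cap (V(H_1)\setminus S)\neq\emptyset$, $e\cap S\neq\emptyset$ and $e\cap (V(H_2)\setminus S)\neq\emptyset$ is an edge of $H$; and (ii) the number of edges of $H$ meeting each of $V(H_1)\setminus S$, $S$ and $V(H_2)\setminus S$ equals $$\binom{n}{r}-\binom{n_1}{r}-\binom{n_2}{r}+\binom{k}{r}-\binom{n-k}{r}+\binom{n_1-k}{r}+\binom{n_2-k}{r}.$$
   Context: Binomial coefficients satisfy $\binom{a}{b}=0$ when $b>a$. A hypergraph $H=(V,E)$ consists of a finite vertex set $V$ and a set $E$ of non-empty subsets of $V$ (edges). $H$ is $r$-uniform if every edge has exactly $r$ elements. The complement $H^c$ of an $r$-uniform hypergraph is the $r$-uniform hypergraph on the same vertex set whose edges are the $r$-subsets not in $E$. A subhypergraph of $H$ is $H'=(V',E')$ with $V'\subseteq V$, $E'\subseteq E$. For $e\in E(H^c)$, $H+e=(V,E\cup\{e\})$. For $Y\subseteq V$, $H[Y]$ is the induced hypergraph with vertex set $Y$ and edges $\{e\in E: e\subseteq Y\}$, and $H-Y=H[V\setminus Y]$. Connectedness and components are defined via paths (alternating sequences of distinct vertices and distinct edges, consecutive vertices lying in the intermediate edge). A vertex-cut is a set $X$ with $H-X$ disconnected. $\kappa(H)$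 is the minimum size of a vertex-cut if one exists, and $|V(H)|-1$ otherwise. $\overline{\kappa}(H)=\max\{\kappa(H'): H'\subseteq H\}$. $H$ is vertex-$k$-maximal if $\overline{\kappa}(H)\leq k$ but $\overline{\kappa}(H+e)\geq k+1$ for every $e\in E(H^c)$. For such $H$ with $|V(H)|\geq k+r$, a separation triple $(S,H_1,H_2)$ is obtained by taking a minimum vertex-cut $S$ (of size $k$), a component $C_1$ of $H-S$, letting $C_2=H-(S\cup V(C_1))$, $H_1=H[S\cup V(C_1)]$ and $H_2=H[S\cup V(C_2)]$. *)

(* Defs.v *)
From HB Require Import structures.
From mathcomp Require Import all_boot all_order all_algebra.
From Stdlib Require Import ClassicalEpsilon.
Set Implicit Arguments. Unset Strict Implicit. Unset Printing Implicit Defensive.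

Notation hgraph T := ({set T} * {set {set T}})%type.

Definition pb (P : Prop) : bool :=
  if excluded_middle_informative P then true else false.

Section Hyp.
Variable T : finType.

Definition is_hypergraph (H : hgraph T) : Prop :=
  forall e, e \in H.2 -> e \subset H.1 /\ e != set0.

Definition is_path (H : hgraph T) (x y : T) : Prop :=
  exists (vs : seq T) (es : seq {set T}),
    [/\ uniq vs, uniq es, size vs = (size es).+1,
        all (fun v => v \in H.1) vs & all (fun e => e \in H.2) es] /\
    [/\ head x vs = x, last x vs = y &
        forall i, i < size es ->
          (nth x vs i \in nth set0 es i) && (nth x vs i.+1 \in nth set0 es i)].

Definition connected (H : hgraph T) : Prop :=
  forall x y, x \in H.1 -> y \in H.1 -> is_path H x y.

Definition induced (H : hgraph T) (Y : {set T}) : hgraph T :=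
  (Y, [set e in H.2 | e \subset Y]).
Definition hdel (H : hgraph T) (Y : {set T}) : hgraph T :=
  induced H (H.1 :\: Y).

Definition is_cut (H : hgraph T) (X : {set T}) : Prop :=
  X \subset H.1 /\ ~ connected (hdel H X).

Definition is_min_cut (H : hgraph T) (X : {set T}) : Prop :=
  is_cut H X /\ forall Y, is_cut H Y -> #|X| <= #|Y|.

Definition is_component (H : hgraph T) (C : {set T}) : Prop :=
  C \subset H.1 /\ exists2 x, x \in C &
    forall y, y \in C <-> (y \in H.1 /\ is_path H x y).

Definition kappa (H : hgraph T) : nat :=
  if pb (exists X, is_cut H X)
  then \big[minn/#|H.1|]_(X : {set T} | pb (is_cut H X)) #|X|
  else #|H.1|.-1.

Definition subhyp (H' H : hgraph T) : Prop :=
  [/\ H'.1 \subset H.1, H'.2 \subset H.2 & is_hypergraph H'].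

Definition kappa_bar (H : hgraph T) : nat :=
  \max_(H' : hgraph T | pb (subhyp H' H)) kappa H'.

Definition add_edge (H : hgraph T) (e : {set T}) : hgraph T := (H.1, e |: H.2).

Definition compl_edge (r : nat) (H : hgraph T) (e : {set T}) : Prop :=
  [/\ e \subset H.1, #|e| = r & e \notin H.2].

Definition vertex_k_maximal (k r : nat) (H : hgraph T) : Prop :=
  kappa_bar H <= k /\
  forall e, compl_edge r H e -> k.+1 <= kappa_bar (add_edge H e).

(* (S, H1, H2) is a separation triple: S minimum vertex-cut of size k,
   C1 (vertex set of) a component of H - S; then
   V(H1) = S :|: C1, V(H2) = S :|: (V :\: (S :|: C1)). *)
Definition separation (k : nat) (H : hgraph T) (S C1 : {set T}) : Prop :=
  [/\ is_min_cut H S, #|S| = k & is_component (hdel H S) C1].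

Definition meets (e A : {set T}) : bool := e :&: A != set0.

End Hyp.

(* Main.v *)
Require Import Defs.
From HB Require Import structures.
From mathcomp Require Import all_boot all_order all_algebra.
From mathcomp Require Import zify.
From Stdlib Require Import ClassicalEpsilon.
Import GRing.Theory Num.Theory.

Module Aux.
Set Implicit Arguments. Unset Strict Implicit. Unset Printing Implicit Defensive.
Section P.
Variable T : finType.
Implicit Types (H : hgraph T).

Definition pathP H (x y : T) (vs : seq T) (es : seq {set T}) : Prop :=
    [/\ uniq vs, uniq es, size vs = (size es).+1,
        all (fun v => v \in H.1) vs & all (fun e => e \in H.2) es] /\
    [/\ head x vs = x, last x vs = y &
        forall i, i < size es ->
          (nth x vs i \in nth set0 es i) && (nth x vs i.+1 \in nth set0 es i)].

Lemma path_trunc H x y vs es i : pathP H x y vs es -> i < size vs ->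
  pathP H x (nth x vs i) (take i.+1 vs) (take i es).
Proof.
move=> [[u1 u2 sz a1 a2] [hd lt ed]] hi.
have hi' : i <= size es by rewrite -ltnS -sz.
split; split.
- exact: take_uniq.
- exact: take_uniq.
- by rewrite !size_takel.
- by apply/allP => v /mem_take hv; apply: (allP a1).
- by apply/allP => v /mem_take hv; apply: (allP a2).
- by case: vs sz hd {u1 a1 lt ed hi}.
- by rewrite -nth_last size_takel //= nth_take.
- move=> j; rewrite size_takel // => hj.
  rewrite !nth_take //; last by rewrite ltnS ltnW.
  by apply: ed; apply: leq_trans hj hi'.
Qed.

Lemma path_app H x y vs es z f : pathP H x y vs es -> z \notin vs -> f \notin es ->
  f \in H.2 -> z \in H.1 -> y \in f -> z \in f ->
  pathP H x z (rcons vs z) (rcons es f).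
Proof.
move=> [[u1 u2 sz a1 a2] [hd lt ed]] zn fn fH zH yf zf.
split; split.
- by rewrite rcons_uniq zn.
- by rewrite rcons_uniq fn.
- by rewrite !size_rcons sz.
- by rewrite all_rcons zH.
- by rewrite all_rcons fH.
- by case: vs sz hd {u1 a1 lt ed zn}.
- by rewrite last_rcons.
- move=> i; rewrite size_rcons ltnS leq_eqVlt => /orP [/eqP ->|hi].
  + have Hy : nth x vs (size es) = y by rewrite -lt -nth_last sz.
    by rewrite !nth_rcons sz ltnSn !ltnn !eqxx /= Hy yf zf.
  + have hi2 : i < (size es).+1 by apply: ltnW.
    by rewrite !nth_rcons sz hi (ltnS i.+1) hi hi2; apply: ed.

Qed.

Lemma path_ext H x y z f : is_path H x y -> f \in H.2 -> y \in f -> z \in f ->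
  z \in H.1 -> is_path H x z.
Proof.
move=> [vs [es P]] fH yf zf zH.
have P' := P; case: P' => [[u1 u2 sz a1 a2] [hd lt ed]].
case: (boolP (z \in vs)) => zv.
  exists (take (index z vs).+1 vs), (take (index z vs) es).
  have hi : index z vs < size vs by rewrite index_mem.
  by have := path_trunc P hi; rewrite nth_index.
case: (boolP (f \in es)) => fe.
  set j := index f es.
  have hj : j < size es by rewrite index_mem.
  have hj' : j < size vs by rewrite sz ltnW.
  have P2 := path_trunc P hj'.
  exists (rcons (take j.+1 vs) z), (rcons (take j es) f).
  apply: path_app P2 _ _ fH zH _ zf.
  - by apply: contra zv => /mem_take.
  - have := take_uniq j.+1 u2; rewrite (take_nth set0 hj) rcons_uniq nth_index //.
    by case/andP.
  - by have := ed j hj; rewrite nth_index // => /andP [].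
exists (rcons vs z), (rcons es f); exact: path_app P zv fe fH zH yf zf.
Qed.

End P.
Section Q.
Variable T : finType.
Implicit Types (H : hgraph T).

Lemma pbP (P : Prop) : pb P = true <-> P.
Proof. by rewrite /pb; case: excluded_middle_informative. Qed.

Lemma bigmin_le_seq (I : eqType) (s : seq I) (P : pred I) (F : I -> nat) a i :
  i \in s -> P i -> \big[minn/a]_(j <- s | P j) F j <= F i.
Proof.
elim: s => [//|x s IH]; rewrite in_cons big_cons => /orP [/eqP <-|hs] Pi.
  by rewrite Pi geq_minl.
case: (P x); last exact: IH.
by apply: leq_trans (geq_minr _ _) (IH hs Pi).
Qed.

Lemma kappa_le H X : is_cut H X -> kappa H <= #|X|.
Proof.
move=> hX; rewrite /kappa.
have -> : pb (exists X : {set T}, is_cut H X) = true by apply/pbP; exists X.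
apply: bigmin_le_seq; first exact: mem_index_enum.
exact/pbP.
Qed.

Lemma comp_step (V : {set T}) (E : {set {set T}}) (S C1 : {set T}) (y z : T) (f : {set T}) : is_component (hdel (V, E) S) C1 ->
  y \in C1 -> f \in E -> f \subset V :\: S -> y \in f -> z \in f -> z \in C1.
Proof.
case=> sub [x0 _ iff] hy fE fsub yf zf.
have [_ py] := (iff y).1 hy.
apply/iff; split; first exact: (subsetP fsub).
apply: (path_ext py _ yf zf); last exact: (subsetP fsub).
by rewrite /= inE fE fsub.
Qed.

Lemma part1 (k r : nat) (V : {set T}) (E : {set {set T}}) (S C1 e0 : {set T}) :
  vertex_k_maximal k r (V, E) -> #|S| = k ->
  is_component (hdel (V, E) S) C1 -> e0 \subset V -> #|e0| = r ->
  meets e0 C1 -> meets e0 S -> meets e0 (V :\: (S :|: C1)) -> e0 \in E.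
Proof.
move=> [vk1 vk2] cS comp e0V e0r m1 mS m2.
apply: contraT => e0n.
have := vk2 e0 (And3 e0V e0r e0n).
suff : kappa_bar (add_edge (V, E) e0) <= k by move=> h1 h2; have := leq_trans h2 h1; rewrite ltnn.
apply/bigmax_leqP => [[V' E']] /pbP [/= sub1 sub2 hyp].
case: (boolP (e0 \in E')) => he; last first.
  apply: leq_trans vk1; rewrite /kappa_bar.
  apply: (@leq_bigmax_cond _ _ (fun H0 => kappa H0) (V', E')).
  apply/pbP; split => //=.
  apply/subsetP => f hf; have := subsetP sub2 f hf; rewrite in_setU1.
  by case/orP => [/eqP eq|//]; move: he; rewrite -eq hf.
have e0V' : e0 \subset V' by have [] := hyp e0 he.
have C1sub : C1 \subset V :\: S by case: comp.
apply: leq_trans (kappa_le (X := S :&: V') _) _; last first.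
  by rewrite -cS subset_leq_card // subsetIl.
split; first exact: subsetIr.
move=> conn.
have [a] := set0Pn _ m1; rewrite inE => /andP [ae0 aC1].
have [b] := set0Pn _ m2; rewrite !inE negb_or => /andP [be0 /andP [/andP [bnS bnC1] bV]].
have [s] := set0Pn _ mS; rewrite inE => /andP [se0 sS].
have aVS := subsetP C1sub a aC1; rewrite inE in aVS; case/andP: aVS => anS aV.
have ha : a \in (hdel (V', E') (S :&: V')).1.
  by rewrite /= !inE (negbTE anS) (subsetP e0V' a ae0).
have hb : b \in (hdel (V', E') (S :&: V')).1.
  by rewrite /= !inE (negbTE bnS) (subsetP e0V' b be0).
have [vs [es [[u1 u2 sz a1 a2] [hd lt ed]]]] := conn a b ha hb.
have key : forall i, i <= size es -> nth a vs i \in C1.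
  elim=> [|i IH] hi; first by rewrite nth0 hd.
  have hi' : i < size es by [].
  have := ed i hi' => /andP [h1 h2].
  have := allP a2 _ (mem_nth set0 hi'); rewrite /= inE => /andP [fE' fsub].
  set f := nth set0 es i in h1 h2 fE' fsub.
  apply: (comp_step comp (IH (ltnW hi)) _ _ h1 h2).
    have := subsetP sub2 f fE'; rewrite in_setU1 => /orP [/eqP eq|//].
    have := subsetP fsub s; rewrite eq se0 !inE sS (subsetP e0V' s se0) /=.
    by move=> /(_ isT).
  apply/subsetP => v vf; have := subsetP fsub v vf; rewrite !inE.
  case/andP => h3 h4; rewrite (subsetP sub1 v h4) andbT.
  by move: h3; rewrite h4 andbT.
have := key _ (leqnn _).
have -> : nth a vs (size es) = b by rewrite -lt -nth_last sz.
by rewrite (negbTE bnC1).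
Qed.

End Q.
End Aux.
Import Aux.
Section R.
Variable T : finType.
Variable r : nat.
Definition D (A : {set T}) := [set e : {set T} | e \subset A & #|e| == r].

Lemma DI (A B : {set T}) : D A :&: D B = D (A :&: B).
Proof.
apply/setP => e; rewrite !inE subsetI.
by case: (e \subset A); case: (e \subset B); case: (#|e| == r).
Qed.

Lemma cardD (A : {set T}) : #|D A| = 'C(#|A|, r).
Proof. exact: cards_draws. Qed.

Lemma DS (A B : {set T}) : A \subset B -> D A \subset D B.
Proof.
move=> AB; apply/subsetP => e; rewrite !inE => /andP [h1 ->].
by rewrite (subset_trans h1 AB).
Qed.
End R.
Arguments D {T}.

Ltac fin := let h1 := fresh in let h2 := fresh in move=> h1 h2;
  first [done | by move: (h1 isT) | by move: (h2 isT)].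

Theorem lemma2p3 (T : finType) (n k r : nat)
  (V : {set T}) (E : {set {set T}}) (S C1 : {set T}) :
  2 <= k -> 2 <= r -> k + r <= n ->
  #|V| = n ->
  (forall e, e \in E -> e \subset V /\ #|e| = r) ->
  vertex_k_maximal k r (V, E) ->
  separation k (V, E) S C1 ->
  let C2 := V :\: (S :|: C1) in
  let n1 := #|S :|: C1| in
  let n2 := #|S :|: C2| in
  (forall e : {set T}, e \subset V -> #|e| = r ->
     meets e C1 -> meets e S -> meets e C2 -> e \in E) /\
  (Posz #|[set e in E | [&& meets e C1, meets e S & meets e C2]]| =
     (Posz 'C(n, r) - Posz 'C(n1, r) - Posz 'C(n2, r) + Posz 'C(k, r)
      - Posz 'C(n - k, r) + Posz 'C(n1 - k, r) + Posz 'C(n2 - k, r))%R).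
Proof.
move=> hk hr hn hV hE vk [[[SV _] _] cS comp] C2 n1 n2.
have P1 : forall e : {set T}, e \subset V -> #|e| = r ->
     meets e C1 -> meets e S -> meets e C2 -> e \in E.
  by move=> e h1 h2 h3 h4 h5; apply: (part1 vk cS comp h1 h2 h3 h4 h5).
split => //.
have C1sub : C1 \subset V :\: S by case: comp.
have memC1 : forall v, v \in C1 -> (v \in V) && (v \notin S).
  by move=> v /(subsetP C1sub); rewrite inE andbC.
have memS : forall v, v \in S -> v \in V by move=> v /(subsetP SV).
have nm : forall (e A : {set T}), e \subset V -> ~~ meets e A = (e \subset V :\: A).
  by move=> e A eV; rewrite /meets negbK subsetD eV setI_eq0.
pose A1 := V :\: C1. pose A2 := V :\: S. pose A3 := V :\: C2.
pose U := (D r A1 :|: D r A2) :|: D r A3.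
have Tg : [set e in E | [&& meets e C1, meets e S & meets e C2]] = D r V :\: U.
  apply/setP => e; rewrite !inE.
  case: (boolP (e \in E)) => eE /=.
    have [eV er] := hE e eE.
    rewrite eV er eqxx /= -!nm //.
    by case: (meets e C1); case: (meets e S); case: (meets e C2).
  case: (boolP ((e \subset V) && (#|e| == r))) => [/andP [eV /eqP er]|]; last by rewrite andbF.
  rewrite er eqxx /= !andbT -!nm //.
  case h1: (meets e C1); case h2: (meets e S); case h3: (meets e C2) => //=.
  by move: eE; rewrite (P1 e eV er h1 h2 h3).
have sA1 : A1 = S :|: C2.
  apply/setP => v; rewrite /A1 /C2 !inE.
  move: (memS v) (memC1 v); case: (v \in V); case: (v \in S); case: (v \in C1); fin.
have sA3 : A3 = S :|: C1.
  apply/setP => v; rewrite /A3 /C2 !inE.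
  move: (memS v) (memC1 v); case: (v \in V); case: (v \in S); case: (v \in C1); fin.
have s12 : A1 :&: A2 = C2.
  apply/setP => v; rewrite /A1 /A2 /C2 !inE.
  move: (memS v) (memC1 v); case: (v \in V); case: (v \in S); case: (v \in C1); fin.
have s13 : A1 :&: A3 = S.
  apply/setP => v; rewrite /A1 /A3 /C2 !inE.
  move: (memS v) (memC1 v); case: (v \in V); case: (v \in S); case: (v \in C1); fin.
have s23 : A2 :&: A3 = C1.
  apply/setP => v; rewrite /A2 /A3 /C2 !inE.
  move: (memS v) (memC1 v); case: (v \in V); case: (v \in S); case: (v \in C1); fin.
have s0 : (A1 :&: A3) :&: (A2 :&: A3) = set0.
  apply/setP => v; rewrite /A1 /A2 /A3 /C2 !inE.
  move: (memS v) (memC1 v); case: (v \in V); case: (v \in S); case: (v \in C1); fin.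
have i1 : S :&: C1 = set0.
  apply/setP => v; rewrite !inE.
  move: (memS v) (memC1 v); case: (v \in V); case: (v \in S); case: (v \in C1); fin.
have i2 : S :&: C2 = set0.
  apply/setP => v; rewrite /C2 !inE.
  move: (memS v) (memC1 v); case: (v \in V); case: (v \in S); case: (v \in C1); fin.
have c1 := cardsUI S C1; rewrite i1 cards0 addn0 -/n1 in c1.
have c2 := cardsUI S C2; rewrite i2 cards0 addn0 -/n2 in c2.
have cA2 := cardsID S V; rewrite (setIidPr SV) -/A2 in cA2.
have UV : U \subset D r V.
  by rewrite !subUset !DS // subsetDl.
have E1 := cardsID U (D r V); rewrite (setIidPr UV) -Tg in E1.
have E2 := cardsUI (D r A1 :|: D r A2) (D r A3).
have E3 := cardsUI (D r A1) (D r A2).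
rewrite setIUl in E2.
have E4 := cardsUI (D r A1 :&: D r A3) (D r A2 :&: D r A3).
rewrite !DI s0 s12 s13 s23 !cardD in E2 E3 E4 E1.
rewrite cards0 bin0n in E4.
rewrite -/U in E2.
set w := #|D r A1 :|: D r A2| in E2 E3.
rewrite sA1 -/n2 in E3.
rewrite sA3 -/n1 in E2.
rewrite hV in E1 cA2.
have r0 : (r == 0) = false by apply/negbTE; rewrite -lt0n; apply: leq_trans hr.
rewrite r0 cS addn0 in E4.
rewrite cS in cA2 c1 c2.
have -> : n1 - k = #|C1| by lia.
have -> : n2 - k = #|C2| by lia.
have -> : n - k = #|A2| by lia.
move: E1 E2 E3 E4.
set t := #|[set e in E | _]|. set u := #|U|.
set z := #|D r S :|: D r C1|.
lia.
Qed.
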